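(* In the $n$-fold replicate economy: (i) if all firms have increasing returns to diversification, then $W$ at the fully connected structure is at least $W$ at the islands structure; (ii) if all firms have decreasing returns to diversification, then $W$ at the islands structure is at least $W$ at the fully connected structure.
   Context: Sectors $0$ (labor) and $1,\dots,L$; base shares $a_{0,\ell}>0$, $\sum a_{0,\ell}=1$; requirements $b_{\ell,\ell'}\ge0$, $b_{\ell,0}>0$, $\sum_{\ell'=0}^Lb_{\ell,\ell'}\le1$. $n$-fold replicate: firms $M=\{1,\dots,nL\}$, $M_\ell=\{(\ell-1)n+1,\dots,\ell n\}$ (firm $(\ell-1)n+c$ in country $c$), household share $a_{0,i}=a_{0,\ell}/n$ for $i\in M_\ell$. For a partition $\mathcal{Q}=\{Q_1,\dots,Q_K\}$ of $\{1,\dots,n\}$, $Q_{\ell,k}=\{(\ell-1)n+c:c\in Q_k\}$ and $a^{\mathcal{Q}}$: for $i\in Q_{\ell,k}$, $a_{i,0}=b_{\ell,0}$, $a_{i,i}=b_{\ell,\ell}$, $a_{i,j}=0$ for $j\in Q_{\ell,k}\setminus\{i\}$, $a_{i,j}=b_{\ell,\ell'}/|Q_k|$ for $j\in Q_{\ell',k}$, $\ell'\notin\{0,\ell\}$, $0$ otherwise. Islands structure: $\mathcal{Q}=\{\{1\},\dots,\{n\}\}$; fully connected: $\mathcal{Q}=\{\{1,\dots,n\}\}$. Welfare $W(A,\lambda)=a_0^T(I-A)^{-1}u$, $A=(a_{i,j})_{i,j\in M}$, $u_i=\log\lambda_i(a_i)+\sum_{j\in M\cup\{0\}}a_{i,j}\log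 a_{i,j}$. Hicks-neutral productivity $\bar\lambda(a_i)=1/\prod_{j\in M}a_{i,j}^{a_{i,j}}$. Firm $i$ (with productivity function $\lambda_i>0$ on $\mathbb{R}^M_+$) has increasing (resp. decreasing) returns to diversification if for all $a_i,a'_i$: $\bar\lambda(a_i)\ge\bar\lambda(a'_i)\Rightarrow \lambda_i(a_i)/\lambda_i(a'_i)\ge\bar\lambda(a_i)/\bar\lambda(a'_i)$ (resp. $\le$). *)

(* Defs.v *)
From HB Require Import structures.
From mathcomp Require Import all_boot all_order all_algebra.
From mathcomp Require Import all_classical all_reals all_analysis.
Set Implicit Arguments. Unset Strict Implicit. Unset Printing Implicit Defensive.
Import Order.TTheory GRing.Theory Num.Theory.
Local Open Scope ring_scope.

(* Firms of the n-fold replicate: M = 'I_(L*n) (0-based), firm i = l*n + c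
   is in sector l = i %/ n and country c = i %% n. *)
Lemma sector_lt (L n : nat) (i : 'I_(L * n)) : (i %/ n < L)%N.
Proof.
case: n i => [|n] i; first by case: i => k; rewrite muln0.
by rewrite ltn_divLR // ltn_ord.
Qed.

Lemma country_lt (L n : nat) (i : 'I_(L * n)) : (i %% n < n)%N.
Proof.
case: n i => [|n] i; first by case: i => k; rewrite muln0.
by rewrite ltn_mod.
Qed.

Definition sector (L n : nat) (i : 'I_(L * n)) : 'I_L := Ordinal (sector_lt i).
Definition country (L n : nat) (i : 'I_(L * n)) : 'I_n := Ordinal (country_lt i).

Section Econ.
Variable R : realType.

(* Hicks-neutral productivity lambda-bar(a_i) = 1 / prod_j a_ij^a_ij (0^0 = 1). *)
Definition hicks (m : nat) (a : 'rV[R]_m) : R :=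
  1 / \prod_(j < m) (a 0 j `^ a 0 j).

Definition nonneg_row (m : nat) (a : 'rV[R]_m) : Prop := forall j, 0 <= a 0 j.

Definition incr_returns (m : nat) (lam : 'rV[R]_m -> R) : Prop :=
  forall a a' : 'rV[R]_m, nonneg_row a -> nonneg_row a' ->
    hicks a' <= hicks a -> hicks a / hicks a' <= lam a / lam a'.

Definition decr_returns (m : nat) (lam : 'rV[R]_m -> R) : Prop :=
  forall a a' : 'rV[R]_m, nonneg_row a -> nonneg_row a' ->
    hicks a' <= hicks a -> lam a / lam a' <= hicks a / hicks a'.

(* Welfare W(A, lambda) = a0^T (I - A)^{-1} u, with
   u_i = log lambda_i(a_i) + sum_{j in M u {0}} a_ij log a_ij.
   Labor shares a_{i,0} are given by alab; (ln 0 = 0, so 0 log 0 = 0). *)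
Definition uvec (m : nat) (alab : 'I_m -> R) (A : 'M[R]_m)
    (lam : 'I_m -> 'rV[R]_m -> R) : 'cV[R]_m :=
  \col_i (ln (lam i (row i A)) + alab i * ln (alab i)
          + \sum_(j < m) A i j * ln (A i j)).

Definition welfare (m : nat) (a0 : 'rV[R]_m) (alab : 'I_m -> R) (A : 'M[R]_m)
    (lam : 'I_m -> 'rV[R]_m -> R) : R :=
  (a0 *m invmx (1%:M - A) *m uvec alab A lam) 0 0.

Variables (L n : nat).

Definition hh_shares (a0s : 'I_L -> R) : 'rV[R]_(L * n) :=
  \row_i (a0s (sector i) / n%:R).

Definition labor_shares (b0 : 'I_L -> R) : 'I_(L * n) -> R :=
  fun i => b0 (sector i).

Definition netQ (Q : {set {set 'I_n}}) (b : 'I_L -> 'I_L -> R) : 'M[R]_(L * n) :=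
  \matrix_(i < L * n, j < L * n)
    if sector i == sector j then (if i == j then b (sector i) (sector i) else 0)
    else if country j \in finset.pblock Q (country i)
         then b (sector i) (sector j) / #|finset.pblock Q (country i)|%:R
         else 0.

Definition islands : {set {set 'I_n}} := [set [set c] | c : 'I_n].
Definition fully_connected : {set {set 'I_n}} := [set [set: 'I_n]].

End Econ.

(* Main.v *)
Require Import Defs.
From HB Require Import structures.
From mathcomp Require Import all_boot all_order all_algebra.
From mathcomp Require Import all_classical all_reals all_analysis.
From mathcomp Require Import zify ring lra.
Import Order.TTheory GRing.Theory Num.Theory.
Set Implicit Arguments. Unset Strict Implicit.
Local Open Scope ring_scope.
Section Firm.
Variables L n : nat.

Lemma firm_lt (l : 'I_L) (c : 'I_n) : (l * n + c < L * n)%N.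
Proof. have := ltn_ord c; have := ltn_ord l; nia. Qed.

Definition firm (l : 'I_L) (c : 'I_n) : 'I_(L * n) := Ordinal (firm_lt l c).

Lemma sector_firm l c : sector (firm l c) = l.
Proof.
apply: val_inj => /=; have hn : (0 < n)%N by case: c => /= c; case: n {l} => //.
by rewrite divnMDl // divn_small ?addn0.
Qed.

Lemma country_firm l c : country (firm l c) = c.
Proof. by apply: val_inj => /=; rewrite modnMDl modn_small. Qed.

Lemma firmK i : firm (sector i) (country i) = i.
Proof. by apply: val_inj => /=; rewrite -divn_eq. Qed.

Lemma firm_inj l c l' c' : (firm l c == firm l' c') = (l == l') && (c == c').
Proof.
apply/idP/idP => [/eqP H | /andP[/eqP-> /eqP->] //].
move: (congr1 (@sector L n) H) (congr1 (@country L n) H).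
by rewrite !sector_firm !country_firm => -> ->; rewrite !eqxx.
Qed.

Lemma sum_firm (R : nmodType) (F : 'I_(L * n) -> R) :
  \sum_i F i = \sum_(l < L) \sum_(c < n) F (firm l c).
Proof.
rewrite pair_big /= (reindex (fun p : 'I_L * 'I_n => firm p.1 p.2)) //.
exists (fun i => (sector i, country i)) => [[l c] _ | i _] /=.
  by rewrite sector_firm country_firm.
by rewrite firmK.
Qed.
End Firm.
Section MMat.
Variable R : realType.

Lemma Mmat (m : nat) (A : 'M[R]_m) :
  (forall i j, 0 <= A i j) -> (forall i, \sum_j A i j < 1) ->
  (1%:M - A) \in unitmx /\ (forall i j, 0 <= invmx (1%:M - A) i j).
Proof.
move=> A0 Ar.
have U : (1%:M - A) \in unitmx.
  rewrite unitmxE unitfE -det_tr; apply/negP => /det0P [v vn0 vA].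
  have E k : v 0 k = \sum_j A k j * v 0 j.
    move/matrixP: vA => /(_ 0 k); rewrite !mxE => /eqP.
    rewrite (bigD1 k) //= !mxE eqxx mulr1n.
    rewrite (eq_bigr (fun j => - (A k j * v 0 j))); last first.
      by move=> j /negbTE jk; rewrite !mxE eq_sym jk mulr0n sub0r mulrN mulrC.
    rewrite sumrN => /eqP H; rewrite [RHS](bigD1 k) //=.
    move: H; set S := \sum_(i < m | i != k) _; lra.
  case: (pickP (fun j => v 0 j != 0)) => [j0 Hj0 | H]; last first.
    apply: (negP vn0); apply/eqP/rowP => j; rewrite mxE.
    by move/negbFE/eqP: (H j).
  case: (@arg_maxP _ _ _ j0 xpredT (fun k => `|v 0 k|) isT) => k _ Hk.
  have P1 : `|v 0 k| <= (\sum_j A k j) * `|v 0 k|.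
    rewrite {1}E mulr_suml; apply: le_trans (ler_norm_sum _ _ _) _.
    apply: ler_sum => j _; rewrite normrM (ger0_norm (A0 _ _)).
    by apply: ler_wpM2l => //; apply: Hk.
  have P2 : 0 < `|v 0 k| by apply: lt_le_trans (Hk j0 isT); rewrite normr_gt0.
  have := Ar k; move: P1 P2; set r := \sum_j A k j; set x := `|v 0 k|; nra.
split => // i j.
set X := invmx _.
have E k : X k j = (k == j)%:R + \sum_l A k l * X l j.
  move/matrixP: (mulmxV U) => /(_ k j); rewrite !mxE => <-.
  rewrite (eq_bigr (fun l => (k == l)%:R * X l j - A k l * X l j)); last first.
    by move=> l _; rewrite !mxE mulrBl.
  rewrite sumrB (bigD1 k) //= eqxx mul1r big1 ?addr0.
    by rewrite subrK.
  by move=> l /negbTE; rewrite eq_sym => ->; rewrite mul0r.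
case: (@arg_minP _ _ _ j xpredT (fun k => X k j) isT) => k _ Hk.
apply: le_trans (Hk i isT).
have P1 : (\sum_l A k l) * X k j <= X k j.
  rewrite {2}E mulr_suml.
  have : \sum_l A k l * X k j <= \sum_l A k l * X l j.
    apply: ler_sum => l _; apply: ler_wpM2l => //; exact: Hk.
  have : 0 <= (k == j)%:R :> R by rewrite ler0n.
  lra.
have := Ar k; move: P1; set r := \sum_l A k l; set x := X k j; nra.
Qed.
End MMat.
Section Net.
Variables (R : realType) (L n : nat) (b : 'I_L -> 'I_L -> R).

Definition netw (w : 'I_n -> 'I_n -> R) : 'M[R]_(L * n) :=
  \matrix_(i, j) if sector i == sector j then
                   (if i == j then b (sector i) (sector i) else 0)
                 else w (country i) (country j) * b (sector i) (sector j).

Lemma netwE w l c l' c' : netw w (firm l c) (firm l' c') =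
  if l == l' then (if c == c' then b l l else 0) else w c c' * b l l'.
Proof.
rewrite mxE !sector_firm !country_firm firm_inj.
by case: eqP => [->|] //=.
Qed.

Definition w_isl (c c' : 'I_n) : R := (c' == c)%:R.
Definition w_full (c c' : 'I_n) : R := 1 / n%:R.

Lemma pblock_isl (c : 'I_n) : finset.pblock (islands n) c = [set c].
Proof.
rewrite /finset.pblock; case: pickP => [B /andP[HB HcB] | H] /=.
  by case/finset.imsetP: HB HcB => c' _ ->; rewrite finset.in_set1 => /eqP->.
have := H [set c]; move=> /negbT; rewrite /= finset.set11 andbT => /negP[].
apply/finset.imsetP; by exists c.
Show.
Qed.

Lemma pblock_full (c : 'I_n) : finset.pblock (fully_connected n) c = [set: 'I_n].
Proof.
rewrite /finset.pblock; case: pickP => [B /andP[HB HcB] | H] /=.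
  by move: HB; rewrite finset.in_set1 => /eqP.
have := H [set: 'I_n]; move=> /negbT; rewrite /= finset.in_setT andbT => /negP[].
by rewrite /fully_connected finset.in_set1.
Qed.

Lemma netQ_isl : netQ (islands n) b = netw w_isl.
Proof.
apply/matrixP => i j; rewrite !mxE; case: eqP => // _.
rewrite pblock_isl finset.in_set1 finset.cards1 divr1 /w_isl.
by case: eqP => _; rewrite ?mul1r ?mul0r.
Qed.

Lemma netQ_full : netQ (fully_connected n) b = netw w_full.
Proof.
apply/matrixP => i j; rewrite !mxE; case: eqP => // _.
by rewrite pblock_full finset.in_setT finset.cardsT card_ord /w_full mulrC div1r.
Qed.

End Net.
Section Net2.
Variables (R : realType) (L n : nat) (b : 'I_L -> 'I_L -> R).

Lemma netw_rowsum (w : 'I_n -> 'I_n -> R) l c : (forall c, \sum_c' w c c' = 1) ->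
  \sum_j netw b w (firm l c) j = \sum_l' b l l'.
Proof.
move=> Hw; rewrite sum_firm; apply: eq_bigr => l' _.
under eq_bigr do rewrite netwE.
case: eqP => [<-|_].
  rewrite (bigD1 c) //= eqxx big1 ?addr0 // => c' /negbTE.
  by rewrite eq_sym => ->.
by rewrite -mulr_suml Hw mul1r.
Qed.

Lemma netw_colsum (w : 'I_n -> 'I_n -> R) (D : 'I_L -> R) l' c' :
  (forall c', \sum_c w c c' = 1) ->
  \sum_i D (sector i) * netw b w i (firm l' c') = \sum_l D l * b l l'.
Proof.
move=> Hw; rewrite sum_firm; apply: eq_bigr => l _.
under eq_bigr do rewrite netwE sector_firm.
case: eqP => [->|_].
  rewrite (bigD1 c') //= eqxx big1 ?addr0 // => c /negbTE ->.
  by rewrite mulr0.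
under eq_bigr do rewrite mulrCA.
by rewrite -mulr_suml Hw mul1r.
Qed.

Lemma entropy_cmp l c : (0 < n)%N -> (forall l l', 0 <= b l l') ->
  \sum_j netw b (@w_full R n) (firm l c) j * ln (netw b (@w_full R n) (firm l c) j)
  <= \sum_j netw b (@w_isl R n) (firm l c) j * ln (netw b (@w_isl R n) (firm l c) j).
Proof.
move=> n0 Hb; rewrite !sum_firm; apply: ler_sum => l' _.
under eq_bigr do rewrite netwE.
under [in X in _ <= X]eq_bigr do rewrite netwE.
case: eqP => _ //.
rewrite /w_full /w_isl div1r sumr_const card_ord.
rewrite (bigD1 c) //= eqxx big1 ?addr0; last first.
  by move=> c' /negbTE ->; rewrite !mul0r.
rewrite mulr1n !mul1r.
have hb := Hb l l'.
have [<-|bpos] := eqVneq 0 (b l l').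
  by rewrite !mulr0 !mul0r mul0rn.
have bp : 0 < b l l' by rewrite lt_neqAle bpos hb.
have Np : 0 < n%:R :> R by rewrite ltr0n.
have lN : 0 <= ln (n%:R : R) by apply: ln_ge0; rewrite ler1n.
rewrite lnM ?posrE ?invr_gt0 // lnV ?posrE //.
rewrite -[X in X <= _]mulr_natr.
have -> : n%:R^-1 * b l l' * (- ln (n%:R : R) + ln (b l l')) * n%:R
   = b l l' * (ln (b l l') - ln (n%:R : R)).
  by field; rewrite gt_eqF.
move: bp lN; set x := b l l'; set y := ln _; set z := ln _; nra.
Qed.
End Net2.
Section Main.
Variable R : realType.

Lemma hicks_row m (A : 'M[R]_m) i : (forall j, 0 <= A i j) ->
  hicks (row i A) = expR (- \sum_j A i j * ln (A i j)).
Proof.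
move=> Ha; rewrite /hicks expRN expR_sum div1r; congr (_^-1).
apply: eq_bigr => j _; rewrite !mxE /powR; case: eqP => [->|_].
  by rewrite mul0r expR0.
by rewrite mulrC.
Qed.

Lemma ln_div (x y : R) : 0 < x -> 0 < y -> ln (x / y) = ln x - ln y.
Proof. by move=> hx hy; rewrite lnM ?posrE ?invr_gt0 // lnV ?posrE. Qed.

Lemma welfare_sum m (a0 : 'rV[R]_m) alab A lam :
  welfare a0 alab A lam = \sum_i (a0 *m invmx (1%:M - A)) 0 i * uvec alab A lam i 0.
Proof. by rewrite /welfare mxE. Qed.

Variables (L n : nat) (a0s : 'I_L -> R) (b : 'I_L -> 'I_L -> R) (b0 : 'I_L -> R).
Hypotheses (Ha0 : forall l, 0 < a0s l) (Hb : forall l l', 0 <= b l l')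
  (Hb0 : forall l, 0 < b0 l) (Hbs : forall l, b0 l + \sum_l' b l l' <= 1)
  (npos : (0 < n)%N).

Definition Bm : 'M[R]_L := \matrix_(l, l') b l l'.
Definition Dv : 'rV[R]_L := (\row_l a0s l) *m invmx (1%:M - Bm).
Definition dv : 'rV[R]_(L * n) := \row_i (Dv 0 (sector i) / n%:R).

Lemma Bm_prop : (1%:M - Bm) \in unitmx /\ (forall i j, 0 <= invmx (1%:M - Bm) i j).
Proof.
apply: Mmat => [i j|i]; rewrite ?mxE //.
under eq_bigr do rewrite mxE.
have := Hbs i; have := Hb0 i; lra.
Qed.

Lemma dv_ge0 i : 0 <= dv 0 i.
Proof.
rewrite mxE; apply: divr_ge0; last by rewrite ler0n.
rewrite mxE; apply: sumr_ge0 => k _; apply: mulr_ge0; rewrite ?mxE.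
  exact: ltW.
exact: Bm_prop.2.
Qed.

Lemma netw_ge0 (w : 'I_n -> 'I_n -> R) : (forall c c', 0 <= w c c') ->
  forall i j, 0 <= netw b w i j.
Proof.
move=> Hw i j; rewrite -[i]firmK -[j]firmK netwE.
by case: ifP => _; [case: ifP|apply: mulr_ge0].
Qed.

Lemma domar (w : 'I_n -> 'I_n -> R) : (forall c c', 0 <= w c c') ->
  (forall c, \sum_c' w c c' = 1) -> (forall c', \sum_c w c c' = 1) ->
  hh_shares n a0s *m invmx (1%:M - netw b w) = dv.
Proof.
move=> Hw0 Hwr Hwc.
have UN : (1%:M - netw b w) \in unitmx.
  apply: (Mmat _ _).1 => [i j|i]; first exact: netw_ge0.
  rewrite -[i]firmK netw_rowsum //.
  have := Hbs (sector i); have := Hb0 (sector i); lra.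
have DE : Dv *m (1%:M - Bm) = \row_l a0s l.
  by rewrite mulmxKV //; exact: Bm_prop.1.
rewrite /dv; move: (Dv) DE => D DE.
have dE : (\row_i (D 0 (sector i) / n%:R)) *m (1%:M - netw b w) = hh_shares n a0s.
  apply/rowP => j; rewrite -[j]firmK.
  have C : \sum_i (\row_i (D 0 (sector i) / n%:R)) 0 i * netw b w i (firm (sector j) (country j))
         = \sum_l D 0 l / n%:R * b l (sector j).
    rewrite -(netw_colsum (w:=w) b (fun l => D 0 l / n%:R) (sector j) (country j)) //.
    by apply: eq_bigr => i _; rewrite mxE.
  move/rowP: DE => /(_ (sector j)) E.
  rewrite mulmxBr mulmx1 !mxE in E.
  rewrite (eq_bigr (fun i => D 0 i * b i (sector j))) in E; last first.
    by move=> i _; rewrite mxE.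
  rewrite mulmxBr mulmx1 [LHS]mxE [X in _ + X]mxE [X in - X]mxE C mxE sector_firm.
  rewrite [RHS]mxE sector_firm -E mulrBl mulr_suml; congr (_ - _).
  by apply: eq_bigr => l _; rewrite mulrAC.
by rewrite -dE mulmxK.
Qed.

End Main.
Lemma w_isl_props (R : realType) (n : nat) :
  [/\ (forall c c', 0 <= @w_isl R n c c'),
      (forall c, \sum_c' @w_isl R n c c' = 1) &
      (forall c', \sum_c @w_isl R n c c' = 1)].
Proof.
split => [c c'|c|c']; rewrite /w_isl ?ler0n //.
  rewrite (bigD1 c) //= eqxx big1 ?addr0 // => c' /negbTE ->.
  by [].
rewrite (bigD1 c') //= eqxx big1 ?addr0 // => c /negbTE.
by rewrite eq_sym => ->.
Qed.

Lemma w_full_props (R : realType) (n : nat) : (0 < n)%N ->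
  [/\ (forall c c', 0 <= @w_full R n c c'),
      (forall c, \sum_c' @w_full R n c c' = 1) &
      (forall c', \sum_c @w_full R n c c' = 1)].
Proof.
move=> n0.
have H : \sum_(c < n) (1 / n%:R : R) = 1.
  rewrite sumr_const card_ord -mulr_natr; field.
  by rewrite pnatr_eq0 -lt0n.
split => [c c'|c|c']; rewrite /w_full //.
Qed.

Theorem mainTheorem13 (R : realType) (L n : nat)
  (a0s : 'I_L -> R) (b : 'I_L -> 'I_L -> R) (b0 : 'I_L -> R)
  (lam : 'I_(L * n) -> 'rV[R]_(L * n) -> R) :
  (forall l, 0 < a0s l) -> \sum_l a0s l = 1 ->
  (forall l l', 0 <= b l l') -> (forall l, 0 < b0 l) ->
  (forall l, b0 l + \sum_l' b l l' <= 1) ->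
  (forall i (a : 'rV[R]_(L * n)), nonneg_row a -> 0 < lam i a) ->
  ((forall i, incr_returns (lam i)) ->
     welfare ((@hh_shares R L n a0s)) ((@labor_shares R L n b0))
             ((@netQ R L n (islands n) b)) lam
     <= welfare ((@hh_shares R L n a0s)) ((@labor_shares R L n b0))
             ((@netQ R L n (fully_connected n) b)) lam)
  /\
  ((forall i, decr_returns (lam i)) ->
     welfare ((@hh_shares R L n a0s)) ((@labor_shares R L n b0))
             ((@netQ R L n (fully_connected n) b)) lam
     <= welfare ((@hh_shares R L n a0s)) ((@labor_shares R L n b0))
             ((@netQ R L n (islands n) b)) lam).
Proof.
move=> Ha0 _ Hb Hb0 Hbs Hlam.
have [n0|npos] := posnP n.
  subst n; rewrite !welfare_sum !big1 //; move=> [i hi] _; exfalso; move: hi; by rewrite muln0.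
rewrite netQ_isl netQ_full !welfare_sum.
have [Ii1 Ii2 Ii3] := w_isl_props R n.
have [If1 If2 If3] := w_full_props R npos.
rewrite (domar a0s Hb Hb0 Hbs Ii1 Ii2 Ii3) (domar a0s Hb Hb0 Hbs If1 If2 If3).
set Ni := netw b (@w_isl R n).
set Nf := netw b (@w_full R n).
have nni i : nonneg_row (row i Ni) by move=> j; rewrite mxE; exact: netw_ge0.
have nnf i : nonneg_row (row i Nf) by move=> j; rewrite mxE; exact: netw_ge0.
set Si := fun i => \sum_j Ni i j * ln (Ni i j).
set Sf := fun i => \sum_j Nf i j * ln (Nf i j).
have Hent i : Sf i <= Si i.
  rewrite /Sf /Si -[i]firmK; exact: entropy_cmp npos Hb.
have hi i : hicks (row i Ni) = expR (- Si i) by apply: hicks_row => j; exact: netw_ge0.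
have hf i : hicks (row i Nf) = expR (- Sf i) by apply: hicks_row => j; exact: netw_ge0.
have hle i : hicks (row i Ni) <= hicks (row i Nf).
  by rewrite hi hf ler_expR lerN2.
have lnh i : ln (hicks (row i Nf) / hicks (row i Ni)) = Si i - Sf i.
  by rewrite hi hf ln_div ?expR_gt0 // !expRK; lra.
have li i := Hlam i _ (nni i).
have lf i := Hlam i _ (nnf i).
have hip i : 0 < hicks (row i Ni) by rewrite hi expR_gt0.
have hfp i : 0 < hicks (row i Nf) by rewrite hf expR_gt0.
split => Hret.
  apply: ler_sum => i _; apply: ler_wpM2l; first exact: (dv_ge0 Ha0 Hb Hb0 Hbs).
  rewrite !mxE -/(Si i) -/(Sf i).
  have := Hret i _ _ (nnf i) (nni i) (hle i).
  have P1 := divr_gt0 (hfp i) (hip i); have P2 := divr_gt0 (lf i) (li i).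
  rewrite -ler_ln ?posrE // lnh ln_div //; lra.
apply: ler_sum => i _; apply: ler_wpM2l; first exact: (dv_ge0 Ha0 Hb Hb0 Hbs).
rewrite !mxE -/(Si i) -/(Sf i).
have := Hret i _ _ (nnf i) (nni i) (hle i).
have P1 := divr_gt0 (hfp i) (hip i); have P2 := divr_gt0 (lf i) (li i).
rewrite -ler_ln ?posrE // lnh ln_div //; lra.
Qed.
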